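(* For $\beta\ge4$, the quantum query complexity of the following task is $\Omega(\beta)$: given a block-encoding $U$ of $\sqrt{H}$ for a Hamiltonian $H$, prepare a quantum state $\rho$ with $\|\rho-e^{-\beta H}/\mathcal{Z}\|_1\le 0.01$, where $\mathcal Z=\operatorname{tr}(e^{-\beta H})$.
   Context: A block-encoding of a matrix $A$ is a unitary $U$ whose upper-left block equals $A$. One query means one application of $U$, $U^\dagger$, or their controlled versions. $\|\cdot\|_1$ is the trace norm. The query complexity is the minimum number of queries of a quantum algorithm that achieves the stated preparation (succeeding for every valid $H$). *)

(* Defs.v *)
From mathcomp Require Import all_boot all_order all_algebra.
From mathcomp Require Import reals.
From mathcomp Require Import sequences exp.
From mathcomp Require Import complex mxtens.

Set Implicit Arguments.
Unset Strict Implicit.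
Unset Printing Implicit Defensive.

Import Order.TTheory GRing.Theory Num.Theory.
Local Open Scope ring_scope.

Section QuantumDefs.
Variable R : realType.
Local Notation C := R[i].

Definition mxadj m n (A : 'M[C]_(m, n)) : 'M[C]_(n, m) := (map_mx (@conjc R) A)^T.

Definition unitary n (U : 'M[C]_n) : Prop := U *m mxadj U = 1%:M /\ mxadj U *m U = 1%:M.

Definition isometry m n (W : 'M[C]_(m, n)) : Prop := mxadj W *m W = 1%:M.

Definition orth_proj n (P : 'M[C]_n) : Prop := P *m P = P /\ mxadj P = P.

Definition rdiag n (lam : 'rV[R]_n) : 'M[C]_n := diag_mx (map_mx (real_complex R) lam).

Definition spectral n (H : 'M[C]_n) (V : 'M[C]_n) (lam : 'rV[R]_n) : Prop :=
  unitary V /\ H = V *m rdiag lam *m mxadj V.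

(* G = f(H) in the sense of the functional calculus for a Hermitian H *)
Definition mxfun n (f : R -> R) (H G : 'M[C]_n) : Prop :=
  exists V lam, spectral H V lam /\ G = V *m rdiag (map_mx f lam) *m mxadj V.

Definition psd n (A : 'M[C]_n) : Prop :=
  exists V lam, spectral A V lam /\ forall i, 0 <= lam 0 i.

Definition is_sqrt n (S H : 'M[C]_n) : Prop := psd S /\ S *m S = H.

Definition block_encoding N k (U : 'M[C]_(N + k)) (A : 'M[C]_N) : Prop :=
  unitary U /\ ulsubmx U = A.

(* t = ||X||_1 (sum of singular values = sum of sqrt of eigenvalues of X^* X) *)
Definition trnorm n (X : 'M[C]_n) (t : R) : Prop :=
  exists V mu, spectral (mxadj X *m X) V mu /\ t = \sum_i Num.sqrt (mu 0 i).

(* partial trace over the second tensor factor (tensor index convention of mxtens) *)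
Definition ptrace2 n r (X : 'M[C]_(n * r)) : 'M[C]_n :=
  \matrix_(i, j) \sum_(a < r) X (mxtens_index (i, a)) (mxtens_index (j, a)).

(* Workspace C^(N+k) (oracle register) (x) C^m (ancillas).
   State: V_T Q_(T-1) V_(T-1) ... Q_0 V_0 x0, where query j is
   Q_j = U_j (x) P_j + I (x) (I - P_j), with U_j = U or U^* (as chosen by dag j)
   and P_j an orthogonal projector on the ancilla (P_j = I : uncontrolled query,
   P_j = |1><1| on a control qubit : controlled query).
   The output state is obtained by a final isometry W into C^N (x) C^r and tracing
   out C^r. *)
Record query_alg (N k : nat) := QueryAlg {
  qa_m : nat;
  qa_r : nat;
  qa_T : nat;
  qa_x0 : 'cV[C]_((N + k) * qa_m);
  qa_V : nat -> 'M[C]_((N + k) * qa_m);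
  qa_P : nat -> 'M[C]_qa_m;
  qa_dag : nat -> bool;
  qa_W : 'M[C]_(N * qa_r, (N + k) * qa_m)
}.

Definition query_alg_wf N k (A : query_alg N k) : Prop :=
  mxadj (qa_x0 A) *m qa_x0 A = 1%:M /\
  (forall t, (t <= qa_T A)%N -> unitary (qa_V A t)) /\
  (forall t, (t < qa_T A)%N -> orth_proj (qa_P A t)) /\
  isometry (qa_W A).

Definition query_op N k (A : query_alg N k) (U : 'M[C]_(N + k)) (t : nat)
  : 'M[C]_((N + k) * qa_m A) :=
  (if qa_dag A t then mxadj U else U) *t qa_P A t + (1%:M : 'M[C]_(N + k)) *t (1%:M - qa_P A t).

Fixpoint qa_state N k (A : query_alg N k) (U : 'M[C]_(N + k)) (t : nat)
  : 'cV[C]_((N + k) * qa_m A) :=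
  match t with
  | 0 => qa_V A 0 *m qa_x0 A
  | t'.+1 => qa_V A t *m (query_op A U t' *m qa_state A U t')
  end.

Definition qa_output N k (A : query_alg N k) (U : 'M[C]_(N + k)) : 'M[C]_N :=
  let psi := qa_W A *m qa_state A U (qa_T A) in
  ptrace2 (psi *m mxadj psi).

Definition prepares_gibbs N k (beta : R) (A : query_alg N k) : Prop :=
  forall (H S : 'M[C]_N) (U : 'M[C]_(N + k)) (G : 'M[C]_N),
    is_sqrt S H -> block_encoding U S ->
    mxfun (fun x => expR (- (beta * x))) H G ->
    exists t, trnorm (qa_output A U - (\tr G)^-1 *: G) t /\ t <= 1 / 100%:R.

End QuantumDefs.

(* Main.v *)
Require Import Defs.
From mathcomp Require Import all_boot all_order all_algebra.
From mathcomp Require Import reals.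
From mathcomp Require Import sequences exp.
From mathcomp Require Import complex mxtens.
From mathcomp Require Import ring lra.
Import Order.TTheory GRing.Theory Num.Theory.
Set Implicit Arguments.
Unset Strict Implicit.
Unset Printing Implicit Defensive.
Local Open Scope ring_scope.

Section Lin.
Variable R : realType.
Local Notation C := R[i].

Lemma conjcR (x : R) : conjc (x%:C)%C = (x%:C)%C.
Proof. by rewrite /conjc /= oppr0. Qed.

Lemma mxadjM m n p (A : 'M[C]_(m, n)) (B : 'M[C]_(n, p)) :
  mxadj (A *m B) = mxadj B *m mxadj A.
Proof. by rewrite /mxadj map_mxM trmx_mul. Qed.

Lemma mxadjK m n (A : 'M[C]_(m, n)) : mxadj (mxadj A) = A.
Proof.
apply/matrixP => i j; rewrite /mxadj !mxE; exact: conjcK.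
Qed.

Lemma mxadjD m n (A B : 'M[C]_(m, n)) : mxadj (A + B) = mxadj A + mxadj B.
Proof. by apply/matrixP => i j; rewrite /mxadj !mxE rmorphD. Qed.

Lemma mxadjN m n (A : 'M[C]_(m, n)) : mxadj (- A) = - mxadj A.
Proof. by apply/matrixP => i j; rewrite /mxadj !mxE rmorphN. Qed.

Lemma mxadjB m n (A B : 'M[C]_(m, n)) : mxadj (A - B) = mxadj A - mxadj B.
Proof. by rewrite mxadjD mxadjN. Qed.

Lemma mxadj1 n : mxadj (1%:M : 'M[C]_n) = 1%:M.
Proof. by rewrite /mxadj map_mx1 trmx1. Qed.

Lemma mxadj0 m n : mxadj (0 : 'M[C]_(m,n)) = 0.
Proof. by apply/matrixP => i j; rewrite /mxadj !mxE conjc0. Qed.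

Lemma mxadjZR m n (a : R) (A : 'M[C]_(m, n)) : mxadj ((a%:C)%C *: A) = (a%:C)%C *: mxadj A.
Proof. apply/matrixP => i j; rewrite /mxadj !mxE rmorphM; congr (_ * _); exact: conjcR. Qed.

Lemma map_tens m n p q (A : 'M[C]_(m, n)) (B : 'M[C]_(p, q)) :
  map_mx (@conjc R) (A *t B) = map_mx (@conjc R) A *t map_mx (@conjc R) B.
Proof.
apply/matrixP => i j.
rewrite -(mxtens_unindexK i) -(mxtens_unindexK j); case: (mxtens_unindex i) => i1 i2; case: (mxtens_unindex j) => j1 j2.
by rewrite [LHS]mxE !tensmxE !mxE rmorphM.
Qed.

Lemma mxadj_tens m n p q (A : 'M[C]_(m, n)) (B : 'M[C]_(p, q)) :
  mxadj (A *t B) = mxadj A *t mxadj B.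
Proof. by rewrite /mxadj map_tens trmx_tens. Qed.

Lemma tensmxDl m n p q (A B : 'M[C]_(m, n)) (D : 'M[C]_(p, q)) :
  (A + B) *t D = A *t D + B *t D.
Proof.
apply/matrixP => i j.
rewrite -(mxtens_unindexK i) -(mxtens_unindexK j); case: (mxtens_unindex i) => i1 i2; case: (mxtens_unindex j) => j1 j2.
by rewrite [RHS]mxE !tensmxE !mxE mulrDl.
Qed.

Lemma tensmxDr m n p q (A : 'M[C]_(m, n)) (B D : 'M[C]_(p, q)) :
  A *t (B + D) = A *t B + A *t D.
Proof.
apply/matrixP => i j.
rewrite -(mxtens_unindexK i) -(mxtens_unindexK j); case: (mxtens_unindex i) => i1 i2; case: (mxtens_unindex j) => j1 j2.
by rewrite [RHS]mxE !tensmxE !mxE mulrDr.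
Qed.

Lemma tensmxNl m n p q (A : 'M[C]_(m, n)) (D : 'M[C]_(p, q)) :
  (- A) *t D = - (A *t D).
Proof.
apply/matrixP => i j.
rewrite -(mxtens_unindexK i) -(mxtens_unindexK j); case: (mxtens_unindex i) => i1 i2; case: (mxtens_unindex j) => j1 j2.
by rewrite [RHS]mxE !tensmxE !mxE mulNr.
Qed.

Lemma tensmxNr m n p q (A : 'M[C]_(m, n)) (D : 'M[C]_(p, q)) :
  A *t (- D) = - (A *t D).
Proof.
apply/matrixP => i j.
rewrite -(mxtens_unindexK i) -(mxtens_unindexK j); case: (mxtens_unindex i) => i1 i2; case: (mxtens_unindex j) => j1 j2.
by rewrite [RHS]mxE !tensmxE !mxE mulrN.
Qed.

Lemma tensmxZl m n p q (a : C) (A : 'M[C]_(m, n)) (D : 'M[C]_(p, q)) :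
  (a *: A) *t D = a *: (A *t D).
Proof.
apply/matrixP => i j.
rewrite -(mxtens_unindexK i) -(mxtens_unindexK j); case: (mxtens_unindex i) => i1 i2; case: (mxtens_unindex j) => j1 j2.
by rewrite [RHS]mxE !tensmxE !mxE mulrA.
Qed.

Lemma tens11 m n : (1%:M : 'M[C]_m) *t (1%:M : 'M[C]_n) = 1%:M.
Proof.
apply/matrixP => i j.
rewrite -(mxtens_unindexK i) -(mxtens_unindexK j); case: (mxtens_unindex i) => i1 i2; case: (mxtens_unindex j) => j1 j2.
rewrite tensmxE !mxE.
have -> : (mxtens_index (i1, i2) == mxtens_index (j1, j2)) = (i1 == j1) && (i2 == j2).
  apply/eqP/andP => [/(can_inj (@mxtens_indexK _ _)) [-> ->] // | [/eqP -> /eqP ->] //].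
by case: (i1 == j1); case: (i2 == j2); rewrite /= ?mulr1 ?mulr0 ?mul0r.
Qed.


Definition ip n (x y : 'cV[C]_n) : C := (mxadj x *m y) 0 0.
Definition nsq n (x : 'cV[C]_n) : R :=
  \sum_i (complex.Re (x i 0) ^+ 2 + complex.Im (x i 0) ^+ 2).
Definition nrm n (x : 'cV[C]_n) : R := Num.sqrt (nsq x).

Lemma conjc_mulK (z : C) : conjc z * z = ((complex.Re z ^+ 2 + complex.Im z ^+ 2)%:C)%C.
Proof.
case: z => a b /=; apply/eqP; rewrite eq_complex /=; apply/andP; split; apply/eqP; ring.
Qed.

Lemma ipxx n (x : 'cV[C]_n) : ip x x = ((nsq x)%:C)%C.
Proof.
rewrite /ip /nsq mxE rmorph_sum /=; apply: eq_bigr => i _.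
by rewrite /mxadj !mxE conjc_mulK.
Qed.

Lemma nsq_ge0 n (x : 'cV[C]_n) : 0 <= nsq x.
Proof. by apply: sumr_ge0 => i _; rewrite addr_ge0 // sqr_ge0. Qed.

Lemma nrm_ge0 n (x : 'cV[C]_n) : 0 <= nrm x.
Proof. exact: sqrtr_ge0. Qed.

Lemma nrm_sq n (x : 'cV[C]_n) : nrm x ^+ 2 = nsq x.
Proof. by rewrite /nrm sqr_sqrtr // nsq_ge0. Qed.

Lemma nsq_eq n1 n2 (x : 'cV[C]_n1) (y : 'cV[C]_n2) : ip x x = ip y y -> nsq x = nsq y.
Proof. by rewrite !ipxx => -[]. Qed.

Lemma ipDl n (x y z : 'cV[C]_n) : ip (x + y) z = ip x z + ip y z.
Proof. by rewrite /ip mxadjD mulmxDl mxE. Qed.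
Lemma ipDr n (x y z : 'cV[C]_n) : ip z (x + y) = ip z x + ip z y.
Proof. by rewrite /ip mulmxDr mxE. Qed.
Lemma ipNl n (x z : 'cV[C]_n) : ip (- x) z = - ip x z.
Proof. by rewrite /ip mxadjN mulNmx mxE. Qed.
Lemma ipNr n (x z : 'cV[C]_n) : ip z (- x) = - ip z x.
Proof. by rewrite /ip mulmxN mxE. Qed.
Lemma ipZRl n (a : R) (x z : 'cV[C]_n) : ip ((a%:C)%C *: x) z = (a%:C)%C * ip x z.
Proof. by rewrite /ip mxadjZR -scalemxAl mxE. Qed.
Lemma ipZRr n (a : R) (x z : 'cV[C]_n) : ip z ((a%:C)%C *: x) = (a%:C)%C * ip z x.
Proof. by rewrite /ip -scalemxAr mxE. Qed.
Lemma ip_mul n m (M : 'M[C]_(m, n)) (x : 'cV[C]_n) (y : 'cV[C]_m) :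
  ip (M *m x) y = ip x (mxadj M *m y).
Proof. by rewrite /ip mxadjM mulmxA. Qed.
Lemma ip_conj n (x y : 'cV[C]_n) : ip y x = conjc (ip x y).
Proof.
rewrite /ip !mxE rmorph_sum /=; apply: eq_bigr => i _.
rewrite /mxadj !mxE rmorphM mulrC; congr (_ * _); exact: (esym (conjcK _)).
Qed.

Lemma Re_conj (z : C) : complex.Re (conjc z) = complex.Re z.
Proof. by case: z. Qed.
Lemma ReD (z w : C) : complex.Re (z + w) = complex.Re z + complex.Re w.
Proof. by case: z; case: w. Qed.
Lemma ReN (z : C) : complex.Re (- z) = - complex.Re z.
Proof. by case: z. Qed.
Lemma ReMR (a : R) (z : C) : complex.Re ((a%:C)%C * z) = a * complex.Re z.
Proof. by case: z => x y /=; rewrite mul0r subr0. Qed.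

Lemma nsq_comb n (a b : R) (x y : 'cV[C]_n) :
  nsq ((a%:C)%C *: x + (b%:C)%C *: y) =
  a ^+ 2 * nsq x + 2 * a * b * complex.Re (ip x y) + b ^+ 2 * nsq y.
Proof.
have := ipxx ((a%:C)%C *: x + (b%:C)%C *: y).
rewrite !ipDl !ipDr !ipZRl !ipZRr !ipxx (ip_conj x y) => /(congr1 (@complex.Re R)).
rewrite /= !ReD !ReMR Re_conj /= => H; rewrite -H; ring.
Qed.

Lemma CS n (x y : 'cV[C]_n) : complex.Re (ip x y) <= nrm x * nrm y.
Proof.
set r := complex.Re (ip x y).
have Q : forall a b : R, 0 <= a ^+ 2 * nsq x + 2 * a * b * r + b ^+ 2 * nsq y.
  by move=> a b; rewrite -nsq_comb nsq_ge0.
have hx := nrm_sq x; have hy := nrm_sq y.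
have gx := nrm_ge0 x; have gy := nrm_ge0 y.
set s := nrm x in hx gx *; set u := nrm y in hy gy *.
have Q1 := Q u (- s).
rewrite -hx -hy in Q1.
have [hp|hz] := ltrP 0 (s * u).
  nra.
have su0 : s * u = 0 by apply/le_anti; rewrite hz mulr_ge0.
have [rle|rgt] := lerP r 0; first by rewrite su0.
exfalso.
have rn0 : r != 0 by rewrite gt_eqF.
move/eqP: su0; rewrite mulf_eq0 => /orP[] /eqP s0.
- have X0 : nsq x = 0 by rewrite -hx s0 expr0n.
  have := Q (- (nsq y + 1) / (2 * r)) 1.
  have e1 : 2 * (- (nsq y + 1) / (2 * r)) * 1 * r = - (nsq y + 1) by field.
  rewrite e1 X0 mulr0 add0r expr1n mul1r; lra.
- have Y0 : nsq y = 0 by rewrite -hy s0 expr0n.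
  have := Q 1 (- (nsq x + 1) / (2 * r)).
  have e1 : 2 * 1 * (- (nsq x + 1) / (2 * r)) * r = - (nsq x + 1) by field.
  rewrite e1 Y0 mulr0 addr0 expr1n mul1r; lra.
Qed.

Lemma nrm_triangle n (x y : 'cV[C]_n) : nrm (x + y) <= nrm x + nrm y.
Proof.
have := nsq_comb 1 1 x y; rewrite !scale1r expr1n !mul1r mulr1.
have := CS x y; have hx := nrm_sq x; have hy := nrm_sq y; have hxy := nrm_sq (x + y).
have := nrm_ge0 x; have := nrm_ge0 y; have := nrm_ge0 (x + y).
nra.
Qed.


Lemma nsq_iso m n (M : 'M[C]_(m, n)) (x : 'cV[C]_n) :
  mxadj M *m M = 1%:M -> nsq (M *m x) = nsq x.
Proof. by move=> hM; apply: nsq_eq; rewrite ip_mul mulmxA hM mul1mx. Qed.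

Lemma nrm_iso m n (M : 'M[C]_(m, n)) (x : 'cV[C]_n) :
  mxadj M *m M = 1%:M -> nrm (M *m x) = nrm x.
Proof. by move=> hM; rewrite /nrm nsq_iso. Qed.

Lemma nsqN n (x : 'cV[C]_n) : nsq (- x) = nsq x.
Proof. by apply: nsq_eq; rewrite ipNl ipNr opprK. Qed.

Lemma nrmN n (x : 'cV[C]_n) : nrm (- x) = nrm x.
Proof. by rewrite /nrm nsqN. Qed.

Lemma nrmB n (x y : 'cV[C]_n) : nrm (x - y) = nrm (y - x).
Proof. by rewrite -nrmN opprB. Qed.

Lemma nsq_proj n (P : 'M[C]_n) (x : 'cV[C]_n) :
  P *m P = P -> mxadj P = P -> nsq (P *m x) <= nsq x.
Proof.
move=> PP Pa.
have ex : x = P *m x + (1%:M - P) *m x by rewrite mulmxBl mul1mx addrC subrK.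
have h0 : ip (P *m x) ((1%:M - P) *m x) = 0.
  by rewrite ip_mul Pa mulmxA mulmxBr mulmx1 PP subrr mul0mx /ip mulmx0 mxE.
have h1 : ip ((1%:M - P) *m x) (P *m x) = 0 by rewrite ip_conj h0 conjc0.
have : ip x x = ip (P *m x) (P *m x) + ip ((1%:M - P) *m x) ((1%:M - P) *m x).
  by rewrite {1 2}ex ipDl !ipDr h0 h1 addr0 add0r.
rewrite !ipxx -rmorphD => -[->].
by rewrite lerDl nsq_ge0.
Qed.

Lemma nrm_op n m (M : 'M[C]_(m, n)) (P : 'M[C]_n) (e : R) (x : 'cV[C]_n) :
  0 <= e -> P *m P = P -> mxadj P = P ->
  mxadj M *m M = ((e ^+ 2)%:C)%C *: P -> nrm (M *m x) <= e * nrm x.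
Proof.
move=> e0 PP Pa hM.
have h : nsq (M *m x) = e ^+ 2 * nsq (P *m x).
  have : ip (M *m x) (M *m x) = ((e ^+ 2)%:C)%C * ip (P *m x) (P *m x).
    by rewrite ip_mul mulmxA hM -scalemxAl ipZRr ip_mul Pa mulmxA PP.
  by rewrite !ipxx -rmorphM => -[].
have hp := nsq_proj x PP Pa.
have := nrm_sq (M *m x); have := nrm_sq x; have := nrm_ge0 (M *m x); have := nrm_ge0 x.
have := nsq_ge0 (P *m x).
move=> h1 h2 h3 h4 h5.
have hs : nrm (M *m x) ^+ 2 <= (e * nrm x) ^+ 2.
  by rewrite h5 exprMn h4 h; apply: ler_wpM2l => //; rewrite sqr_ge0.
have eb : 0 <= e * nrm x by rewrite mulr_ge0.
nra.
Qed.


Lemma query_op_iso N k (A : query_alg R N k) (U : 'M[C]_(N + k)) t :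
  unitary U -> orth_proj (qa_P A t) ->
  mxadj (query_op A U t) *m query_op A U t = 1%:M.
Proof.
move=> [hU1 hU2] [PP Pa].
have hU : mxadj (if qa_dag A t then mxadj U else U) *m (if qa_dag A t then mxadj U else U) = 1%:M.
  by case: (qa_dag A t); rewrite ?mxadjK.
rewrite /query_op.
set V := (if qa_dag A t then mxadj U else U) in hU *.
set P := qa_P A t in PP Pa *.
rewrite mxadjD !mxadj_tens mxadjB !mxadj1 Pa.
rewrite mulmxDl !mulmxDr !tensmx_mul hU !mulmx1 PP.
have h1 : P *m (1%:M - P) = 0 by rewrite mulmxBr mulmx1 PP subrr.
have h2 : (1%:M - P) *m P = 0 by rewrite mulmxBl mul1mx PP subrr.
have h3 : (1%:M - P) *m (1%:M - P) = 1%:M - P by rewrite mulmxBr mulmx1 h2 subr0.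
rewrite h1 h2 h3 !tensmx0 addr0 add0r -tensmxDr addrC subrK.
exact: tens11.
Qed.

Lemma nrm0 n : nrm (0 : 'cV[C]_n) = 0.
Proof.
rewrite /nrm /nsq big1 ?sqrtr0 // => i _.
by rewrite mxE /= expr0n addr0.
Qed.

Lemma hybrid N k (A : query_alg R N k) (U1 U2 : 'M[C]_(N + k)) (eps : R) :
  query_alg_wf A -> unitary U1 -> unitary U2 -> 0 <= eps ->
  (forall t, (t < qa_T A)%N -> forall x,
     nrm ((query_op A U1 t - query_op A U2 t) *m x) <= eps * nrm x) ->
  forall t, (t <= qa_T A)%N ->
  nrm (qa_state A U1 t - qa_state A U2 t) <= t%:R * eps /\ nsq (qa_state A U2 t) = 1.
Proof.
move=> [hx0 [hV [hP hW]]] hU1 hU2 e0 hQ.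
elim => [_|t IH ht] /=.
  split; first by rewrite subrr nrm0 mul0r.
  have [_ hV0] := hV 0%N isT.
  rewrite nsq_iso //.
  have : ip (qa_x0 A) (qa_x0 A) = 1 by rewrite /ip hx0 mxE.
  by rewrite ipxx => -[].
have [IH1 IH2] := IH (ltnW ht).
have [_ hVt] := hV t.+1 ht.
have hQ1 := query_op_iso hU1 (hP t ht).
have hQ2 := query_op_iso hU2 (hP t ht).
split; last by rewrite nsq_iso // nsq_iso.
set Q1 := query_op A U1 t; set Q2 := query_op A U2 t.
set p1 := qa_state A U1 t; set p2 := qa_state A U2 t.
have -> : qa_V A t.+1 *m (Q1 *m p1) - qa_V A t.+1 *m (Q2 *m p2) =
          qa_V A t.+1 *m (Q1 *m (p1 - p2) + (Q1 - Q2) *m p2).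
  by rewrite -mulmxBr; congr (_ *m _); rewrite mulmxBr mulmxBl addrA subrK.
rewrite nrm_iso //.
apply: le_trans (nrm_triangle _ _) _.
rewrite nrm_iso // -nat1r mulrDl mul1r addrC.
apply: lerD => //.
have := hQ t ht p2.
by rewrite /nrm IH2 sqrtr1 mulr1.
Qed.


Definition selB N r (i0 : 'I_N) : 'M[C]_(r, N * r) :=
  \matrix_(a, m) ((m == mxtens_index (i0, a))%:R).

Lemma selB_entry N r (i0 : 'I_N) (y : 'cV[C]_(N * r)) a :
  (selB r i0 *m y) a 0 = y (mxtens_index (i0, a)) 0.
Proof.
rewrite mxE (bigD1 (mxtens_index (i0, a))) //= mxE eqxx mul1r big1 ?addr0 //.
by move=> m /negbTE hm; rewrite mxE hm mul0r.
Qed.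

Lemma mxadjE m n (M : 'M[C]_(m, n)) i j : mxadj M j i = conjc (M i j).
Proof. by rewrite /mxadj !mxE. Qed.

Lemma ptrace_entry N r (i0 : 'I_N) (y : 'cV[C]_(N * r)) :
  ptrace2 (y *m mxadj y) i0 i0 = ((nsq (selB r i0 *m y))%:C)%C.
Proof.
rewrite -ipxx /ip /ptrace2 mxE [in RHS]mxE; apply: eq_bigr => a _.
rewrite [in LHS]mxE big_ord1 !mxadjE !selB_entry mulrC.
by [].
Qed.

Lemma selB_co N r (i0 : 'I_N) : selB r i0 *m mxadj (selB r i0) = 1%:M.
Proof.
apply/matrixP => a b; rewrite !mxE.
rewrite (bigD1 (mxtens_index (i0, a))) //= big1 ?addr0.
  rewrite /mxadj !mxE eqxx mul1r.
  have -> : (mxtens_index (i0, a) == mxtens_index (i0, b)) = (a == b).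
    apply/eqP/eqP => [/(can_inj (@mxtens_indexK _ _)) [] // | -> //].
  exact: conjc_nat.
by move=> m /negbTE hm; rewrite /selB mxE hm mul0r.
Qed.

Lemma nrm_selB N r (i0 : 'I_N) (y : 'cV[C]_(N * r)) :
  nrm (selB r i0 *m y) <= nrm y.
Proof.
set B := selB r i0.
have hc := selB_co r i0.
have := @nrm_op _ _ B (mxadj B *m B) 1 y ler01.
rewrite mul1r; apply.
- by rewrite mulmxA -(mulmxA (mxadj B)) hc mulmx1.
- by rewrite mxadjM mxadjK.
- by rewrite expr1n scale1r.
Qed.

Lemma sq_diff (a : nat) (x y : 'cV[C]_a) :
  nrm x <= 1 -> nrm y <= 1 ->
  `|nsq x - nsq y| <= 2 * nrm (x - y).
Proof.
move=> hx hy.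
have t1 : nrm x <= nrm y + nrm (x - y).
  by have := nrm_triangle y (x - y); rewrite addrC subrK.
have t2 : nrm y <= nrm x + nrm (x - y).
  by have := nrm_triangle x (y - x); rewrite addrC subrK nrmB.
rewrite -(nrm_sq x) -(nrm_sq y).
have := nrm_ge0 x; have := nrm_ge0 y; have := nrm_ge0 (x - y).
move=> g1 g2 g3.
rewrite ler_norml; apply/andP; split; nra.
Qed.

Lemma output_diff N k (A : query_alg R N k) (U1 U2 : 'M[C]_(N + k)) (i0 : 'I_N) :
  query_alg_wf A ->
  nsq (qa_state A U1 (qa_T A)) = 1 -> nsq (qa_state A U2 (qa_T A)) = 1 ->
  `|complex.Re (qa_output A U1 i0 i0) - complex.Re (qa_output A U2 i0 i0)|
    <= 2 * nrm (qa_state A U1 (qa_T A) - qa_state A U2 (qa_T A)).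
Proof.
move=> [_ [_ [_ hW]]] h1 h2.
rewrite /qa_output !ptrace_entry /=.
set p1 := qa_state A U1 (qa_T A); set p2 := qa_state A U2 (qa_T A).
have n1 : nrm p1 = 1 by rewrite /nrm h1 sqrtr1.
have n2 : nrm p2 = 1 by rewrite /nrm h2 sqrtr1.
apply: le_trans (sq_diff _ _) _.
- by apply: le_trans (nrm_selB _ _) _; rewrite nrm_iso // n1.
- by apply: le_trans (nrm_selB _ _) _; rewrite nrm_iso // n2.
rewrite ler_pM2l // -mulmxBr -mulmxBr.
by apply: le_trans (nrm_selB _ _) _; rewrite nrm_iso.
Qed.


Definition sqc (z : C) : R := complex.Re z ^+ 2 + complex.Im z ^+ 2.

Lemma sqc_ge0 z : 0 <= sqc z.
Proof. by rewrite /sqc addr_ge0 // sqr_ge0. Qed.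

Lemma adjMM_diag m n (M : 'M[C]_(m, n)) j :
  (mxadj M *m M) j j = ((\sum_i sqc (M i j))%:C)%C.
Proof.
rewrite mxE rmorph_sum; apply: eq_bigr => i _.
by rewrite mxadjE conjc_mulK.
Qed.

Lemma MMadj_diag m n (M : 'M[C]_(m, n)) i :
  (M *m mxadj M) i i = ((\sum_j sqc (M i j))%:C)%C.
Proof.
rewrite mxE rmorph_sum; apply: eq_bigr => j _.
by rewrite mxadjE mulrC conjc_mulK.
Qed.

Lemma VDV_diag n (V : 'M[C]_n) (mu : 'rV[R]_n) i :
  (V *m rdiag mu *m mxadj V) i i = ((\sum_k mu 0 k * sqc (V i k))%:C)%C.
Proof.
rewrite /rdiag mul_mx_diag mxE rmorph_sum; apply: eq_bigr => k _.
rewrite !mxE rmorphM /= /sqc -conjc_mulK; ring.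
Qed.

Lemma sum_sq_le n (f : 'I_n -> R) : (forall i, 0 <= f i) ->
  \sum_i f i ^+ 2 <= (\sum_i f i) ^+ 2.
Proof.
move=> f0; rewrite [X in _ <= X]expr2 mulr_suml; apply: ler_sum => i _.
rewrite expr2; apply: ler_wpM2l => //.
by rewrite (bigD1 i) //= lerDl sumr_ge0.
Qed.

Lemma trnorm_entry n (X : 'M[C]_n) (t : R) i0 :
  trnorm X t -> `|complex.Re (X i0 i0)| <= t.
Proof.
move=> [V [mu [[[VV1 VV2] hX] ->]]].
have mu0 : forall k, 0 <= mu 0 k.
  move=> k.
  have hD : mxadj (X *m V) *m (X *m V) = rdiag mu.
    by rewrite mxadjM -mulmxA (mulmxA (mxadj X)) hX !mulmxA VV2 mul1mx -mulmxA VV2 mulmx1.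
  have := adjMM_diag (X *m V) k; rewrite hD /rdiag mxE eqxx mulr1n mxE => -[->].
  by apply: sumr_ge0 => i _; exact: sqc_ge0.
have h1 : sqc (X i0 i0) <= \sum_k mu 0 k * sqc (V i0 k).
  have := adjMM_diag X i0; rewrite hX VDV_diag => -[->].
  by rewrite (bigD1 i0) //= lerDl sumr_ge0 // => i _; exact: sqc_ge0.
have hV1 : \sum_k sqc (V i0 k) = 1.
  by have := MMadj_diag V i0; rewrite VV1 mxE eqxx /= => -[].
have h2 : \sum_k mu 0 k * sqc (V i0 k) <= \sum_k mu 0 k.
  apply: ler_sum => k _; rewrite ler_piMr //.
  by rewrite -hV1 (bigD1 k) //= lerDl sumr_ge0 // => i _; exact: sqc_ge0.
have h3 : \sum_k mu 0 k <= (\sum_k Num.sqrt (mu 0 k)) ^+ 2.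
  have := @sum_sq_le n (fun k => Num.sqrt (mu 0 k)) (fun k => sqrtr_ge0 _).
  by under eq_bigr do rewrite sqr_sqrtr ?mu0 //.
have ht : 0 <= \sum_k Num.sqrt (mu 0 k) by apply: sumr_ge0 => k _; exact: sqrtr_ge0.
have hr : complex.Re (X i0 i0) ^+ 2 <= sqc (X i0 i0) by rewrite /sqc lerDl sqr_ge0.
have hh : complex.Re (X i0 i0) ^+ 2 <= (\sum_k Num.sqrt (mu 0 k)) ^+ 2 by lra.
by rewrite -(ger0_norm ht) -ler_sqr ?normr_ge0 // !real_normK ?num_real.
Qed.

End Lin.
Section Cons.
Variable R : realType.

Definition c0 : R := 3%:R / 5%:R.
Definition s0 : R := 4%:R / 5%:R.

Definition yfun (c s : R) (i j : nat) : R :=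
  match i, j with
  | 0, 0 => c0 | 0, 2 => s0 | 2, 0 => s0 | 2, 2 => - c0
  | 1, 1 => c | 1, 3 => s | 3, 1 => s | 3, 3 => - c
  | _, _ => 0 end.

Definition Ymx (c s : R) : 'M[R]_4 := \matrix_(i, j) yfun c s i j.
Definition Er : 'M[R]_4 := \matrix_(i, j) (if (i == j) && odd i then 1 else 0).


Lemma Y_sym c s : (Ymx c s)^T = Ymx c s.
Proof. apply/matrixP => i j; rewrite !mxE.
case: i => [[|[|[|[|i]]]] Hi] //; case: j => [[|[|[|[|j]]]] Hj] //=. Qed.

Lemma Y_sq c s : c ^+ 2 + s ^+ 2 = 1 -> Ymx c s *m Ymx c s = 1%:M.
Proof.
move=> h; apply/matrixP => i j; rewrite !mxE !big_ord_recr big_ord0 /= !mxE.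
case: i => [[|[|[|[|i]]]] Hi] //; case: j => [[|[|[|[|j]]]] Hj] //=; rewrite /c0 /s0; try lra.
Qed.


Lemma Er_sym : Er^T = Er.
Proof. apply/matrixP => i j; rewrite !mxE.
case: i => [[|[|[|[|i]]]] Hi] //; case: j => [[|[|[|[|j]]]] Hj] //=. Qed.

Lemma Er_sq : Er *m Er = Er.
Proof.
apply/matrixP => i j; rewrite !mxE !big_ord_recr big_ord0 /= !mxE.
case: i => [[|[|[|[|i]]]] Hi] //; case: j => [[|[|[|[|j]]]] Hj] //=; lra.
Qed.

Lemma Y_diff c s c' s' :
  (Ymx c s - Ymx c' s') *m (Ymx c s - Ymx c' s') = ((c - c') ^+ 2 + (s - s') ^+ 2) *: Er.
Proof.
apply/matrixP => i j; rewrite !mxE !big_ord_recr big_ord0 /= !mxE.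
case: i => [[|[|[|[|i]]]] Hi] //; case: j => [[|[|[|[|j]]]] Hj] //=; rewrite /c0 /s0; try ring.
Qed.


Local Notation C := R[i].
Local Notation rC := (real_complex R).

Definition Bmx k (c s : R) : 'M[R]_(4 + k) := block_mx (Ymx c s) 0 0 1%:M.
Definition Ufull k (c s : R) : 'M[C]_(2 + k.+2) := map_mx rC (Bmx k c s).
Definition Efull k : 'M[C]_(2 + k.+2) := map_mx rC (block_mx Er 0 0 (0 : 'M[R]_k)).

Lemma mxadj_rC m n (M : 'M[R]_(m, n)) : mxadj (map_mx rC M) = map_mx rC M^T.
Proof. by apply/matrixP => i j; rewrite !mxE conjcR. Qed.

Lemma Bmx_sym k c s : (Bmx k c s)^T = Bmx k c s.
Proof. by rewrite /Bmx tr_block_mx Y_sym !trmx0 trmx1. Qed.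

Lemma Ufull_adj k c s : mxadj (Ufull k c s) = Ufull k c s.
Proof. by rewrite /Ufull mxadj_rC Bmx_sym. Qed.

Lemma Bmx_sq k c s : c ^+ 2 + s ^+ 2 = 1 -> Bmx k c s *m Bmx k c s = 1%:M.
Proof.
move=> h; rewrite /Bmx mulmx_block !mulmx0 !mul0mx !addr0 !add0r mulmx1 Y_sq //.
by rewrite -scalar_mx_block.
Qed.

Lemma Ufull_unitary k c s : c ^+ 2 + s ^+ 2 = 1 -> unitary (Ufull k c s).
Proof.
move=> h; rewrite /unitary Ufull_adj /Ufull -map_mxM Bmx_sq // map_mx1.
by [].
Qed.


Definition lam (c : R) : 'rV[R]_2 := \row_(i < 2) (if (i : nat) == 0%N then c0 else c).

Lemma Ufull_sub k c s : ulsubmx (Ufull k c s) = rdiag (lam c).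
Proof.
apply/matrixP => i j.
rewrite /Ufull /ulsubmx mxE [in LHS]mxE.
have -> : (lshift k.+2 i : 'I_(4 + k)) = lshift k (widen_ord (isT : (2 <= 4)%N) i) by apply/val_inj.
have -> : (lshift k.+2 j : 'I_(4 + k)) = lshift k (widen_ord (isT : (2 <= 4)%N) j) by apply/val_inj.
rewrite [in LHS]mxE /Bmx block_mxEul /rdiag !mxE.
case: i => [[|[|i]] Hi] //; case: j => [[|[|j]] Hj] //=.
Qed.


Lemma Bmx_diff k c s c' s' :
  (Bmx k c s - Bmx k c' s')^T *m (Bmx k c s - Bmx k c' s') =
  ((c - c') ^+ 2 + (s - s') ^+ 2) *: block_mx Er 0 0 (0 : 'M[R]_k).
Proof.
have -> : Bmx k c s - Bmx k c' s' = block_mx (Ymx c s - Ymx c' s') 0 0 (0 : 'M[R]_k).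
  by rewrite /Bmx opp_block_mx add_block_mx !subrr ?oppr0 ?addr0.
rewrite tr_block_mx !trmx0 linearB /= !Y_sym mulmx_block !mulmx0 !mul0mx !addr0 Y_diff.
by rewrite scale_block_mx !scaler0.
Qed.

Lemma Ufull_diff k c s c' s' :
  mxadj (Ufull k c s - Ufull k c' s') *m (Ufull k c s - Ufull k c' s') =
  (((c - c') ^+ 2 + (s - s') ^+ 2)%:C)%C *: Efull k.
Proof.
rewrite /Ufull -map_mxB mxadj_rC -map_mxM /Efull -map_mxZ; congr (map_mx _ _).
exact: Bmx_diff.
Qed.

Lemma Erb_sq k : block_mx Er 0 0 (0 : 'M[R]_k) *m block_mx Er 0 0 (0 : 'M[R]_k) = block_mx Er 0 0 0.
Proof. by rewrite mulmx_block !mulmx0 !mul0mx !addr0 Er_sq. Qed.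

Lemma Erb_sym k : (block_mx Er 0 0 (0 : 'M[R]_k))^T = block_mx Er 0 0 0.
Proof. by rewrite tr_block_mx Er_sym !trmx0. Qed.

Lemma Efull_proj k : Efull k *m Efull k = Efull k /\ mxadj (Efull k) = Efull k.
Proof.
split.
  rewrite /Efull -map_mxM; congr (map_mx _ _); exact: Erb_sq.
rewrite /Efull mxadj_rC; congr (map_mx _ _); exact: Erb_sym.
Qed.


Definition lam2 (c : R) : 'rV[R]_2 := \row_(i < 2) (lam c 0 i ^+ 2).
Definition fb (beta : R) (x : R) : R := expR (- (beta * x)).
Definition qv (beta c : R) : R := fb beta (c0 ^+ 2) / (fb beta (c0 ^+ 2) + fb beta (c ^+ 2)).

Lemma rdiag_sq (l : 'rV[R]_2) : rdiag l *m rdiag l = rdiag (\row_i (l 0 i ^+ 2)).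
Proof.
rewrite /rdiag mulmx_diag; congr diag_mx; apply/rowP => j.
by rewrite !mxE -rmorphM -expr2.
Qed.

Lemma spectral_diag n (l : 'rV[R]_n) : spectral (rdiag l) 1%:M l.
Proof.
split; first by rewrite /unitary mxadj1 mulmx1.
by rewrite mxadj1 mul1mx mulmx1.
Qed.

Lemma gibbs_entry (beta c : R) :
  ((\tr (rdiag (map_mx (fb beta) (lam2 c))))^-1 *: rdiag (map_mx (fb beta) (lam2 c))) 0 0 = ((qv beta c)%:C)%C.
Proof.
rewrite /mxtrace !big_ord_recr big_ord0 /= /rdiag !mxE /= add0r.
rewrite /qv -rmorphD -fmorphV -rmorphM mulrC.
by [].
Qed.

Lemma apply_prep k (beta : R) (A : query_alg R 2 k.+2) c s :
  prepares_gibbs beta A -> 0 <= c -> c ^+ 2 + s ^+ 2 = 1 ->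
  `|complex.Re (qa_output A (Ufull k c s) 0 0) - qv beta c| <= 1 / 100%:R.
Proof.
move=> hp c0' hcs.
set S := rdiag (lam c).
set H := S *m S.
set G := rdiag (map_mx (fb beta) (lam2 c)).
have hS : is_sqrt S H.
  split => //; exists 1%:M, (lam c); split; first exact: spectral_diag.
  move=> i; rewrite !mxE; case: ifP => _ //.
  by rewrite /c0 divr_ge0 // ler0n.
have hU : block_encoding (Ufull k c s) S.
  by split; [exact: Ufull_unitary | exact: Ufull_sub].
have hG : mxfun (fb beta) H G.
  exists 1%:M, (lam2 c); split.
    by rewrite /H /S rdiag_sq; exact: spectral_diag.
  by rewrite mxadj1 mul1mx mulmx1.
have [t [ht ht1]] := hp H S (Ufull k c s) G hS hU hG.
have := trnorm_entry 0 ht.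
have eN : forall (M : 'M[C]_2) i j, (- M) i j = - M i j by move=> *; rewrite mxE.
rewrite mxE eN gibbs_entry ReD ReN /=.
move=> h; exact: le_trans h ht1.
Qed.


Lemma qv_c0 beta : qv beta c0 = 1 / 2%:R.
Proof.
rewrite /qv; have := expR_gt0 (- (beta * c0 ^+ 2)); rewrite /fb => h.
field; lra.
Qed.

Lemma qv_c1 beta b c1 : beta * b = 1 -> c1 ^+ 2 = c0 ^+ 2 + b ->
  2%:R / 3%:R <= qv beta c1.
Proof.
move=> hb hc; rewrite /qv /fb hc.
have -> : - (beta * (c0 ^+ 2 + b)) = - (beta * c0 ^+ 2) + (- 1) by rewrite mulrDr hb opprD.
rewrite expRD.
set F := expR (- (beta * c0 ^+ 2)); set e := expR (-1).
have F0 : 0 < F by exact: expR_gt0.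
have e0 : 0 < e by exact: expR_gt0.
have eE : e * expR 1 = 1 by rewrite /e -expRD addNr expR0.
have E2 : 2%:R <= expR (1 : R) by have := expR_ge1Dx (1 : R); lra.
have e2 : e <= 1 / 2%:R by nra.
have h1 : 1 + e != 0 by apply: lt0r_neq0; lra.
have h2 : F + F * e != 0 by apply: lt0r_neq0; nra.
have -> : F / (F + F * e) = 1 / (1 + e) by field; rewrite h1 h2.
rewrite ler_pdivlMr; last lra.
lra.
Qed.

Lemma query_op_U N k (A : query_alg R N k) (U : 'M[C]_(N + k)) t :
  mxadj U = U -> query_op A U t = U *t qa_P A t + 1%:M *t (1%:M - qa_P A t).
Proof. by move=> hU; rewrite /query_op hU; case: (qa_dag A t). Qed.

Lemma main_thm :
  exists c : R, 0 < c /\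
  forall beta : R, 4%:R <= beta ->
  exists N : nat, (0 < N)%N /\
  forall (k : nat), (N <= k)%N ->
  forall A : query_alg R N k,
    query_alg_wf A -> prepares_gibbs beta A ->
    c * beta <= (qa_T A)%:R.
Proof.
exists (1 / 50%:R); split; first lra.
move=> beta hbeta; exists 2%N; split => //.
case=> [|[|k]] // _ A hwf hp.
set b := 1 / beta.
have hbb : beta * b = 1 by rewrite /b; field; lra.
have b0 : 0 < b by rewrite /b divr_gt0 //; lra.
have b4 : b <= 1 / 4%:R by rewrite /b ler_pdivrMr; lra.
have c0v : c0 = 3%:R / 5%:R :> R by [].
have s0v : s0 = 4%:R / 5%:R :> R by [].
set x := Num.sqrt (c0 ^+ 2 + b).
set y := Num.sqrt (s0 ^+ 2 - b).
have hx2 : x ^+ 2 = c0 ^+ 2 + b by rewrite sqr_sqrtr // c0v; lra.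
have hy2 : y ^+ 2 = s0 ^+ 2 - b by rewrite sqr_sqrtr // s0v; lra.
have x0 : 0 <= x := sqrtr_ge0 _.
have y0 : 0 <= y := sqrtr_ge0 _.
have hxy : x ^+ 2 + y ^+ 2 = 1 by rewrite hx2 hy2 c0v s0v; field.
have hcs : c0 ^+ 2 + s0 ^+ 2 = 1 :> R by rewrite c0v s0v; field.
set e2 := (c0 - x) ^+ 2 + (s0 - y) ^+ 2.
set eps := Num.sqrt e2.
have e20 : 0 <= e2 by rewrite /e2 addr_ge0 // sqr_ge0.
have eps0 : 0 <= eps := sqrtr_ge0 _.
have heps2 : eps ^+ 2 = e2 by rewrite sqr_sqrtr.
have hA : (x - c0) * (x + c0) = b by rewrite -subr_sqr hx2; ring.
have hB : (s0 - y) * (s0 + y) = b by rewrite -subr_sqr hy2; ring.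
have xa : 3%:R / 5%:R <= x + c0 by rewrite c0v; lra.
have yb : 4%:R / 5%:R <= s0 + y by rewrite s0v; lra.
have hA2 : (x - c0) ^+ 2 <= 25%:R / 9%:R * b ^+ 2.
  have : (x - c0) ^+ 2 * (x + c0) ^+ 2 = b ^+ 2 by rewrite -exprMn hA.
  have : (3%:R / 5%:R) ^+ 2 <= (x + c0) ^+ 2 by rewrite ler_sqr ?nnegrE; lra.
  have := sqr_ge0 (x - c0). nra.
have hB2 : (s0 - y) ^+ 2 <= 25%:R / 16%:R * b ^+ 2.
  have : (s0 - y) ^+ 2 * (s0 + y) ^+ 2 = b ^+ 2 by rewrite -exprMn hB.
  have : (4%:R / 5%:R) ^+ 2 <= (s0 + y) ^+ 2 by rewrite ler_sqr ?nnegrE; lra.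
  have := sqr_ge0 (s0 - y). nra.
have he2 : e2 <= (3%:R * b) ^+ 2.
  rewrite /e2 -(sqrrN (c0 - x)) opprB. nra.
have heps : eps <= 3%:R * b.
  have := sqr_ge0 (eps - 3%:R * b). nra.
set U1 := Ufull k c0 s0.
set U2 := Ufull k x y.
have hU1 : unitary U1 := Ufull_unitary k hcs.
have hU2 : unitary U2 := Ufull_unitary k hxy.
have hQ : forall t, (t < qa_T A)%N -> forall z,
    nrm ((query_op A U1 t - query_op A U2 t) *m z) <= eps * nrm z.
  move=> t ht z.
  have [PP Pa] : orth_proj (qa_P A t) by case: hwf => _ [_ [hP _]]; exact: hP.
  rewrite !query_op_U ?Ufull_adj //.
  rewrite opprD addrACA subrr addr0 -tensmxNl -tensmxDl.
  have [EE Ea] := Efull_proj k.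
  apply: (nrm_op (P := Efull k *t qa_P A t)) => //.
  - by rewrite tensmx_mul EE PP.
  - by rewrite mxadj_tens Ea Pa.
  - rewrite mxadj_tens tensmx_mul Pa PP Ufull_diff heps2 tensmxZl.
    by [].
have [hd _] := hybrid hwf hU1 hU2 eps0 hQ (leqnn _).
have hn1 : nsq (qa_state A U1 (qa_T A)) = 1.
  have hQ0 : forall t, (t < qa_T A)%N -> forall z,
      nrm ((query_op A U1 t - query_op A U1 t) *m z) <= 0 * nrm z.
    by move=> t _ z; rewrite subrr mul0mx nrm0 mul0r.
  by have [_ ->] := hybrid hwf hU1 hU1 (lexx 0) hQ0 (leqnn _).
have [_ hn2] := hybrid hwf hU1 hU2 eps0 hQ (leqnn _).
have hod := output_diff 0 hwf hn1 hn2.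
have hp1 := apply_prep hp (ltW (divr_gt0 (ltr0n _ 3) (ltr0n _ 5))) hcs.
have hp2 := apply_prep hp x0 hxy.
rewrite qv_c0 in hp1.
have hq2 := qv_c1 hbb hx2.
move: hod hp1 hp2.
set r1 := complex.Re _; set r2 := complex.Re _.
set T := (qa_T A)%:R.
have T0 : 0 <= T by rewrite /T ler0n.
move=> hod hp1 hp2.
have k1 : 11%:R / 75%:R <= 2%:R * (T * eps).
  move: hod hp1 hp2; rewrite !ler_norml => /andP[? ?] /andP[? ?] /andP[? ?].
  have : 2%:R * nrm (qa_state A U1 (qa_T A) - qa_state A U2 (qa_T A)) <= 2%:R * (T * eps).
    by rewrite ler_pM2l // /T.
  lra.
have k2 : T * eps <= T * (3%:R * b) by rewrite ler_wpM2l.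
have k3 : 11%:R / 75%:R * beta <= 6%:R * T.
  have : 11%:R / 75%:R * beta <= 6%:R * T * b * beta.
    rewrite ler_wpM2r //; lra.
  by move=> h; apply: le_trans h _; rewrite -mulrA (mulrC b) hbb mulr1.
lra.
Qed.

End Cons.

Theorem theorem2p52 (R : realType) :
  exists c : R, 0 < c /\
  forall beta : R, 4%:R <= beta ->
  exists N : nat, (0 < N)%N /\
  forall (k : nat), (N <= k)%N ->
  forall A : query_alg R N k,
    query_alg_wf A -> prepares_gibbs beta A ->
    c * beta <= (qa_T A)%:R.
Proof. exact: main_thm. Qed.
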